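(* Let $\mathcal H$ be a real Hilbert space and let $\Phi:\mathbb R\to\mathcal H$ be a differentiable map with Lipschitz-continuous differential (so the number of parameters is $W=1$). For a target $\mathbf f\in\mathcal H$ let $L_{\mathbf f}(w)=\frac12\|\mathbf f-\Phi(w)\|^2$ and let $w(t)$, $t\ge 0$, be the solution of the gradient flow $\frac{dw}{dt}=-\frac{d}{dw}L_{\mathbf f}(w(t))$ with $w(0)=0$. Let $F_\Phi=\{\mathbf f\in\mathcal H:\inf_{t\ge0}L_{\mathbf f}(w(t))=0\}$. If $\mathbf f\in F_\Phi$, then either $\mathbf f=\Phi(w)$ for some $w\in\mathbb R$, or $\mathbf f\in\{\mathbf f_-,\mathbf f_+\}$, where $\mathbf f_\pm=\lim_{w\to\pm\infty}\Phi(w)$ (whenever these limits exist). In particular, if $\mathcal H=\mathbb R^d$ with $2\le d<\infty$, then $F_\Phi$ has Lebesgue measure $0$ in $\mathcal H$.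
   Context: The gradient flow solution exists and is unique for all $t\ge0$ under the stated regularity of $\Phi$. Elements of $F_\Phi$ are called GF-learnable targets. *)

(* Defs.v *)
From HB Require Import structures.
From mathcomp Require Import all_boot all_order all_algebra.
From mathcomp Require Import all_classical all_reals all_analysis.
Set Implicit Arguments. Unset Strict Implicit. Unset Printing Implicit Defensive.
Import Order.TTheory GRing.Theory Num.Theory.
Import numFieldNormedType.Exports.
Local Open Scope classical_set_scope.
Local Open Scope ring_scope.

Section GF.
Variable R : realType.

Definition is_inner_product (H : normedModType R) (ip : H -> H -> R) : Prop :=
  [/\ (forall x y, ip x y = ip y x),
      (forall (a : R) x y z, ip (a *: x + y) z = a * ip x z + ip y z)
    & (forall x, x != 0 -> 0 < ip x x)].

Definition ipnorm (H : normedModType R) (ip : H -> H -> R) (x : H) : R :=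
  Num.sqrt (ip x x).

Definition C11 (H : normedModType R) (ip : H -> H -> R) (Phi : R -> H) : Prop :=
  (forall w : R, derivable Phi w 1) /\
  exists k : R, forall x y : R,
    ipnorm ip (derive1 Phi x - derive1 Phi y) <= k * `|x - y|.

Definition loss (H : normedModType R) (ip : H -> H -> R) (Phi : R -> H)
    (f : H) (w : R) : R :=
  2^-1 * ip (f - Phi w) (f - Phi w).

Definition is_GF_solution (H : normedModType R) (ip : H -> H -> R)
    (Phi : R -> H) (f : H) (w : R -> R) : Prop :=
  [/\ w 0 = 0,
      {within [set t : R | 0 <= t], continuous w}
    & forall t : R, 0 < t ->
        derivable w t 1 /\ derive1 w t = - derive1 (loss ip Phi f) (w t)].

Definition GF_learnable (H : normedModType R) (ip : H -> H -> R)
    (Phi : R -> H) : set H :=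
  [set f | exists w : R -> R, is_GF_solution ip Phi f w /\
     inf [set loss ip Phi f (w t) | t in [set t : R | 0 <= t]] = 0].

Definition dotrv (d : nat) (u v : 'rV[R]_d) : R := \sum_(i < d) u 0 i * v 0 i.

Definition lebesgue_null (d : nat) (A : set 'rV[R]_d) : Prop :=
  forall eps : R, 0 < eps ->
    exists a b : nat -> 'rV[R]_d,
      [/\ (forall n i, a n 0 i <= b n 0 i),
          A `<=` \bigcup_n [set x | forall i, a n 0 i <= x 0 i <= b n 0 i]
        & forall N : nat, \sum_(n < N) \prod_(i < d) (b n 0 i - a n 0 i) <= eps].

End GF.

(* Main.v *)
Require Import Defs.
From HB Require Import structures.
From mathcomp Require Import all_boot all_order all_algebra.
From mathcomp Require Import all_classical all_reals all_analysis.
From mathcomp Require Import lra ring zify.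
Import Order.TTheory GRing.Theory Num.Theory.
Import numFieldNormedType.Exports.
Local Open Scope classical_set_scope.
Local Open Scope ring_scope.
Set Implicit Arguments. Unset Strict Implicit.

Section S.
Variable R : realType.
Variable H : normedModType R.
Variable ip : H -> H -> R.
Hypothesis ipC : forall x y, ip x y = ip y x.
Hypothesis ipL : forall (a : R) x y z, ip (a *: x + y) z = a * ip x z + ip y z.

Lemma zid1 (V : zmodType) (f a b : V) : f - a - (f - b) = - (a - b).
Proof. by rewrite [RHS]opprB [f - b]addrC opprD opprK [LHS]addrC addrA subrK. Qed.
Lemma zid2 (V : zmodType) (f a : V) : f + (a - f) = a.
Proof. by rewrite addrCA subrr addr0. Qed.
Lemma ipD x y z : ip (x + y) z = ip x z + ip y z.
Proof. by rewrite -[x]scale1r ipL mul1r scale1r. Qed.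
Lemma ip0 z : ip 0 z = 0.
Proof. have h := ipD 0 0 z; rewrite addr0 in h; lra. Qed.
Lemma ipZ a x z : ip (a *: x) z = a * ip x z.
Proof. by rewrite -[a *: x]addr0 ipL ip0 addr0. Qed.
Lemma ipN x z : ip (- x) z = - ip x z.
Proof. by rewrite -scaleN1r ipZ mulN1r. Qed.
Lemma ipB x y z : ip (x - y) z = ip x z - ip y z.
Proof. by rewrite ipD ipN. Qed.
Lemma ipsq a b : ip a a - ip b b = ip (a - b) a + ip (a - b) b.
Proof. rewrite !ipB (ipC b a); lra. Qed.

Definition ipcont := forall (T : Type) (F : set_system T), Filter F ->
  forall (a b : T -> H) (a0 b0 : H), a @ F --> a0 -> b @ F --> b0 ->
  (fun t => ip (a t) (b t)) @ F --> ip a0 b0.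
Hypothesis ipc : ipcont.

Lemma loss_derivable (Phi : R -> H) f x : derivable Phi x 1 ->
  derivable (loss ip Phi f) x 1.
Proof.
move=> dP.
set u := fun y => f - Phi y.
set D := fun h : R => h^-1 *: (u (h *: 1 + x) - u x).
have hD : D @ 0^' --> - 'D_1 Phi x.
  have -> : D = (fun h => - (h^-1 *: ((Phi \o shift x) (h *: 1) - Phi x))).
    apply/funext => h; rewrite /D /u /= -scalerN; congr (_ *: _).
    exact: zid1.
  exact: cvgN.
have ha : (fun h : R => u (h *: 1 + x)) @ 0^' --> u x.
  have -> : (fun h : R => u (h *: 1 + x)) = (fun h => u x + h *: D h).
    apply/funext => h; rewrite /D; have [->|h0] := eqVneq h 0.
      by rewrite scale0r add0r scale0r addr0.
    by rewrite scalerA divff // scale1r zid2.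
  rewrite -[X in _ --> X]addr0; apply: cvgD; first exact: cvg_cst.
  rewrite -(scale0r (- 'D_1 Phi x)); apply: cvgZ => //.
  exact: cvg_within_filter.
apply/cvg_ex; exists (2^-1 * (ip (- 'D_1 Phi x) (u x) + ip (- 'D_1 Phi x) (u x))).
have -> : (fun h : R => h^-1 *: ((loss ip Phi f \o shift x) (h *: 1) - loss ip Phi f x))
   = (fun h => 2^-1 * (ip (D h) (u (h *: 1 + x)) + ip (D h) (u x))).
  apply/funext => h; rewrite /= /loss /D -/(u _) -/(u x) !ipZ -mulrDr -ipsq.
  rewrite /GRing.scale /=; lra.
apply: cvgM; first exact: cvg_cst.
apply: cvgD; apply: ipc => //; exact: cvg_cst.
Qed.

Lemma tail (L : R -> R) (w : R -> R) :
  {within [set t | 0 <= t], continuous w} ->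
  (forall s t, 0 <= s -> s <= t -> L (w t) <= L (w s)) ->
  (forall e, 0 < e -> exists2 t, 0 <= t & L (w t) < e) ->
  (forall B, exists T, forall t, T <= t -> B < w t) ->
  forall e, 0 < e -> exists M, forall x, M < x -> L x < e.
Proof.
move=> wc wm small big e e0.
have [t0 t00 Lt0] := small e e0.
exists (w t0) => x xM.
have [T hT] := big x.
set T' := Num.max T t0.
have hT' : x < w T' by apply: hT; rewrite le_max lexx.
have t0T' : t0 <= T' by rewrite le_max lexx orbT.
have wc' : {within `[t0, T'], continuous w}.
  apply: continuous_subspaceW wc => s /=; rewrite in_itv /= => /andP[+ _].
  exact: le_trans.
have [|c cin wcx] := IVT t0T' wc' (v := x).
  by rewrite ge_min le_max (ltW xM) (ltW hT') orbT.
rewrite -wcx; apply: le_lt_trans Lt0; apply: wm => //.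
by move: cin; rewrite in_itv /= => /andP[].
Qed.

Lemma itv_ge0 : [set` `[(0:R), +oo[%R] = [set t : R | 0 <= t].
Proof. by apply/seteqP; split => t /=; rewrite in_itv /= andbT. Qed.

Lemma gf_main (Phi : R -> H) f (w : R -> R) :
  (forall x, `|x| ^+ 2 <= ip x x) ->
  (forall y, derivable Phi y 1) ->
  is_GF_solution ip Phi f w ->
  inf [set loss ip Phi f (w t) | t in [set t : R | 0 <= t]] = 0 ->
  (exists y, f = Phi y) \/ (Phi x @[x --> -oo] --> f) \/ (Phi x @[x --> +oo] --> f).
Proof.
move=> nip dP [w0 wc wd] hinf.
set L := loss ip Phi f.
have nL y : `|f - Phi y| ^+ 2 <= 2 * L y.
  by rewrite /L /loss mulrA divff ?mul1r //; exact: nip.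
have L0 y : 0 <= L y.
  have := nL y; have := sqr_ge0 `|f - Phi y|; lra.
have Lz y : L y <= 0 -> f = Phi y.
  move=> Ly; apply/eqP; rewrite -subr_eq0 -normr_eq0.
  have := nL y; have := L0 y; have := normr_ge0 (f - Phi y); nra.
have Lc : continuous L.
  move=> y; apply: cvgM; first exact: cvg_cst.
  have hu : (fun z => f - Phi z) @ y --> f - Phi y.
    apply: cvgB; first exact: cvg_cst.
    by apply: differentiable_continuous; apply/derivable1_diffP.
  exact: ipc.
have dL y : derivable L y 1 by exact: loss_derivable.
have gm : forall s t, 0 <= s -> s <= t -> L (w t) <= L (w s).
  apply: (@ler0_derive1_nincry _ (L \o w) 0).
  - move=> t; rewrite in_itv /= andbT => t0.
    apply/derivable1_diffP; apply: differentiable_comp; apply/derivable1_diffP.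
      by case: (wd t t0).
    exact: dL.
  - move=> t; rewrite in_itv /= andbT => t0.
    have [dw dwe] := wd t t0.
    rewrite (derive1_comp dw (dL _)).
    rewrite dwe.
    rewrite -/L; set a := derive1 L (w t); nra.
  - rewrite itv_ge0 => t; exact: (continuous_comp (wc t) (Lc (w t))).
have small e : 0 < e -> exists2 t, 0 <= t & L (w t) < e.
  move=> e0.
  have hi : has_inf [set L (w t) | t in [set t : R | 0 <= t]].
    split; first by exists (L (w 0)); apply: (@imageP _ _ (fun t => L (w t))) => /=.
    by exists 0 => _ [t _ <-].
  have [z [t t0 tz] zlt] := inf_adherent e0 hi.
  by exists t => //; rewrite tz; rewrite hinf add0r in zlt.
have [hA|hA] := pselect (exists B, forall T, exists t, T <= t /\ `|w t| <= B).
  left; have [B hB] := hA.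
  have [t [_ tB]] := hB 0.
  have BB : -B <= B by have := normr_ge0 (w t); lra.
  have [c _ cmin] := EVT_min BB (continuous_subspaceT Lc).
  exists c; apply: Lz; apply/ler_addgt0Pr => e e0; rewrite add0r.
  have [t0 t00 Lt0] := small e e0.
  have [t1 [t01 t1B]] := hB t0.
  apply: ltW; apply: le_lt_trans Lt0; apply: le_trans (gm _ _ t00 t01).
  by apply: cmin; rewrite in_itv /= -ler_norml.
have hB : forall B, exists T, forall t, T <= t -> B < `|w t|.
  move=> B; apply: contrapT => nT; apply: hA; exists B => T.
  apply: contrapT => nt; apply: nT; exists T => t Tt.
  rewrite ltNge; apply/negP => tB; apply: nt; exists t; split => //.
have [T0 hT0] := hB 0.
set T1 := Num.max T0 0.
have T10 : 0 <= T1 by rewrite le_max lexx orbT.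
have hT1 t : T1 <= t -> 0 < `|w t|.
  by move=> Tt; apply: hT0; apply: le_trans Tt; rewrite le_max lexx.
have wcs a b : 0 <= a -> {within `[a, b], continuous w}.
  move=> a0; apply: continuous_subspaceW wc => s /=; rewrite in_itv /= => /andP[+ _].
  exact: le_trans.
have conv e : 0 < e -> forall y, L y < e ^+ 2 / 2 -> `|f - Phi y| < e.
  move=> e0 y Ly; have := nL y; have := normr_ge0 (f - Phi y); nra.
have [wpos|wneg] := ltP 0 (w T1).
  have pos t : T1 <= t -> 0 < w t.
    move=> Tt; rewrite ltNge; apply/negP => wt.
    have [|c cin wc0] := IVT Tt (wcs _ t T10) (v := 0).
      by rewrite ge_min le_max wt (ltW wpos) orbT.
    move: cin; rewrite in_itv /= => /andP[c1 _].
    by have := hT1 c c1; rewrite wc0 normr0 ltxx.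
  have big B : exists T, forall t, T <= t -> B < w t.
    have [T hT] := hB B; exists (Num.max T T1) => t; rewrite ge_max => /andP[h1 h2].
    by have := hT t h1; rewrite gtr0_norm //; exact: pos.
  have tl := tail wc gm small big.
  right; right; apply/cvgrPdist_lt => e e0.
  have [M hM] := tl (e ^+ 2 / 2) (ltac:(have := mulr_gt0 e0 e0; lra)).
  exists M; split; first exact: num_real.
  by move=> x xM; apply: conv => //; exact: hM.
have wneg' : w T1 < 0.
  by have := hT1 T1 (lexx _); rewrite ler0_norm //; lra.
have neg t : T1 <= t -> w t < 0.
  move=> Tt; rewrite ltNge; apply/negP => wt.
  have [|c cin wc0] := IVT Tt (wcs _ t T10) (v := 0).
    by rewrite ge_min le_max wt (ltW wneg') orbT.
  move: cin; rewrite in_itv /= => /andP[c1 _].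
  by have := hT1 c c1; rewrite wc0 normr0 ltxx.
have big B : exists T, forall t, T <= t -> B < - w t.
  have [T hT] := hB B; exists (Num.max T T1) => t; rewrite ge_max => /andP[h1 h2].
  by have := hT t h1; rewrite ltr0_norm //; exact: neg.
have wc' : {within [set t : R | 0 <= t], continuous (fun t => - w t)}.
  by move=> t; apply: continuousN; exact: wc.
have gm' s t : 0 <= s -> s <= t -> (fun x => L (- x)) (- w t) <= (fun x => L (- x)) (- w s).
  by move=> s0 st /=; rewrite !opprK; exact: gm.
have small' e : 0 < e -> exists2 t, 0 <= t & (fun x => L (- x)) (- w t) < e.
  by move=> e0; have [t t0 h] := small e e0; exists t => //=; rewrite opprK.
have tl := @tail (fun x => L (- x)) (fun t => - w t) wc' gm' small' big.
right; left; apply/cvgrPdist_lt => e e0.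
have [M hM] := tl (e ^+ 2 / 2) (ltac:(have := mulr_gt0 e0 e0; lra)).
exists (- M); split; first exact: num_real.
move=> x xM; apply: conv => //; rewrite -[x]opprK; apply: hM; lra.
Qed.
End S.

Lemma part1 (R : realType) (H : completeNormedModType R) (ip : H -> H -> R)
  (Phi : R -> H) (f : H) :
     is_inner_product ip ->
     (forall x : H, `|x| = ipnorm ip x) ->
     C11 ip Phi ->
     GF_learnable ip Phi f ->
     (exists w : R, f = Phi w) \/
     (Phi x @[x --> -oo] --> f) \/ (Phi x @[x --> +oo] --> f).
Proof.
move=> [ipC ipL ipP] hn [dP _] [w [gs hi]].
have ipp x : 0 <= ip x x.
  by have [->|/ipP/ltW //] := eqVneq x 0; rewrite ip0.
have nsq x : `|x| ^+ 2 = ip x x by rewrite hn /ipnorm sqr_sqrtr.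
have e x y : ip x y = (`|x + y| * `|x + y| - `|x| * `|x| - `|y| * `|y|) / 2.
  rewrite -!expr2 !nsq (ipD ipL) (ipC x (x + y)) (ipC y (x + y)) !(ipD ipL) (ipC y x); lra.
apply: (gf_main ipC ipL _ _ dP gs hi).
  move=> T F FF a b a0 b0 ha hb.
  have -> : (fun t => ip (a t) (b t)) = (fun t => (`|a t + b t| * `|a t + b t| - `|a t| * `|a t| - `|b t| * `|b t|) / 2).
    by apply/funext => t; exact: e.
  rewrite e; apply: cvgM; last exact: cvg_cst.
  have hab : (fun t => a t + b t) @ F --> a0 + b0 by exact: cvgD.
  by apply: cvgB; [apply: cvgB|]; apply: cvgM; apply: cvg_norm.
by move=> x; rewrite nsq.
Qed.
Local Open Scope nat_scope.
Fixpoint tri (s : nat) : nat := if s is s'.+1 then tri s' + s else 0.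
Definition code (q : nat * nat) : nat := tri (q.1 + q.2) + q.1.
Definition step (q : nat * nat) : nat * nat :=
  if q.2 is j.+1 then (q.1.+1, j) else (0, q.1.+1).
Definition unpair (n : nat) : nat * nat := iter n step (0, 0).

Lemma tri_ge s : s <= tri s.
Proof. elim: s => [|s IH] //=; lia. Qed.

Lemma triS s : tri s.+1 = tri s + s.+1. Proof. by []. Qed.

Lemma code_step q : code (step q) = (code q).+1.
Proof.
case: q => k [|j]; rewrite /code /step /=.
  by rewrite !addn0; lia.
by rewrite [k + j.+1]addnS triS; lia.
Qed.

Lemma code_unpair n : code (unpair n) = n.
Proof. by elim: n => [|n IH] //; rewrite /unpair /= code_step -/(unpair n) IH. Qed.

Lemma unpair_code_aux m q : code q = m -> unpair m = q.
Proof.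
elim: m q => [|m IH] [k j] /=.
  rewrite /code /= => h.
  have := tri_ge (k + j); have : k = 0 by lia.
  move=> k0; subst k; rewrite add0n in h * => hj; have : j = 0 by lia.
  by move=> ->.
move=> h; have [q' hq'] : exists q', step q' = (k, j).
  case: k h => [|k] h.
    case: j h => [|j] h; first by rewrite /code /= in h.
    by exists (j, 0).
  by exists (k, j.+1).
rewrite -hq' code_step in h; have h' : code q' = m by case: h.
by rewrite /unpair /= -/(unpair m) (IH _ h') hq'.
Qed.

Lemma unpair_code q : unpair (code q) = q.
Proof. exact: unpair_code_aux. Qed.

Lemma unpair_le n : (unpair n).1 <= n /\ (unpair n).2 <= n.
Proof.
have := code_unpair n; rewrite /code; case: (unpair n) => k j /= h.
have := tri_ge (k + j); lia.
Qed.

Local Open Scope ring_scope.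
Lemma sum_pair_le (R : numDomainType) (v : nat -> nat -> R) N :
  (forall k j, 0 <= v k j) ->
  \sum_(n < N) v (unpair n).1 (unpair n).2 <= \sum_(k < N.+1) \sum_(j < N.+1) v k j.
Proof.
move=> v0.
pose q (n : 'I_N) : 'I_N.+1 * 'I_N.+1 := (inord (unpair n).1, inord (unpair n).2).
have ub (n : 'I_N) : ((unpair n).1 < N.+1)%N /\ ((unpair n).2 < N.+1)%N.
  have [h1 h2] := unpair_le n; have := ltn_ord n; split; lia.
have qinj : {in [set: 'I_N] &, injective q}.
  move=> n m _ _ [h1 h2]; apply/val_inj.
  have [a1 a2] := ub n; have [b1 b2] := ub m.
  have e1 := congr1 (@nat_of_ord _) h1; have e2 := congr1 (@nat_of_ord _) h2.
  rewrite !inordK // in e1 e2.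
  by rewrite -[val n]code_unpair -[val m]code_unpair /code e1 e2.
have -> : \sum_(n < N) v (unpair n).1 (unpair n).2 =
          \sum_(x in q @: [set: 'I_N]) v x.1 x.2.
  rewrite big_imset //=; apply: eq_big => [n|n _]; first by rewrite in_setT.
  by have [a1 a2] := ub n; rewrite /q /= !inordK.
rewrite pair_bigA /= [X in _ <= X](bigID (fun x => x \in q @: [set: 'I_N])) /=.
by rewrite lerDl sumr_ge0.
Qed.

Section Null.
Variable R : realType.
Variable d : nat.

Lemma geom_sum (e : R) K : \sum_(k < K) e / 2 ^+ k.+1 = e - e / 2 ^+ K.
Proof.
elim: K => [|K IH]; first by rewrite big_ord0 expr0 divr1 subrr.
rewrite big_ord_recr /= IH exprS; field.
by rewrite expf_neq0.
Qed.

Lemma null_union (A : nat -> set 'rV[R]_d) :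
  (forall k, lebesgue_null (A k)) -> lebesgue_null (\bigcup_k A k).
Proof.
move=> hA e e0.
have : forall k, exists ab : (nat -> 'rV[R]_d) * (nat -> 'rV[R]_d),
  [/\ (forall n i, ab.1 n 0 i <= ab.2 n 0 i),
      A k `<=` \bigcup_n [set x | forall i, ab.1 n 0 i <= x 0 i <= ab.2 n 0 i]
    & forall N : nat, \sum_(n < N) \prod_(i < d) (ab.2 n 0 i - ab.1 n 0 i) <= e / 2 ^+ k.+1].
  move=> k; have [|a [b h]] := hA k (e / 2 ^+ k.+1).
    by rewrite divr_gt0 // exprn_gt0.
  by exists (a, b).
move=> /choice [g hg].
exists (fun n => (g (unpair n).1).1 (unpair n).2), (fun n => (g (unpair n).1).2 (unpair n).2).
split.
- by move=> n i; have [h _ _] := hg (unpair n).1; exact: h.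
- move=> x [k _ xk]; have [_ h _] := hg k.
  have [j _ xj] := h x xk.
  by exists (code (k, j)) => //=; rewrite unpair_code.
- move=> N.
  pose v := fun k j => \prod_(i < d) ((g k).2 j 0 i - (g k).1 j 0 i).
  have v0 k j : 0 <= v k j.
    apply: prodr_ge0 => i _; have [h _ _] := hg k; rewrite subr_ge0; exact: h.
  have := sum_pair_le N v0; rewrite /v => hs; apply: le_trans hs _.
  apply: le_trans (_ : \sum_(k < N.+1) e / 2 ^+ k.+1 <= e).
    apply: ler_sum => k _; have [_ _ h] := hg k; exact: h.
  rewrite geom_sum lerBlDr lerDl; apply: divr_ge0; [exact: ltW | exact: exprn_ge0].
Qed.


Lemma sum_if_le (t : R) (m N : nat) : 0 <= t ->
  \sum_(n < N) (if (n < m)%N then t else 0) <= m%:R * t.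
Proof.
move=> t0.
have e : forall N, \sum_(n < N) (if (n < m)%N then t else 0) = (minn N m)%:R * t.
  elim=> [|n IH]; first by rewrite big_ord0 min0n mul0r.
  rewrite big_ord_recr /= IH; case: ifP => nm.
    have -> : minn n.+1 m = (minn n m).+1 by move: nm; lia.
    by rewrite -natr1 mulrDl mul1r.
  have -> : minn n.+1 m = minn n m by move: nm; lia.
  by rewrite addr0.
rewrite e; apply: ler_wpM2r => //; rewrite ler_nat; lia.
Qed.

Lemma null_lip (g : R -> 'rV[R]_d) (r K : R) : (1 < d)%N -> 0 < r -> 0 <= K ->
  (forall x y i, -r <= x <= r -> -r <= y <= r -> `|g x 0 i - g y 0 i| <= K * `|x - y|) ->
  lebesgue_null (g @` [set x | -r <= x <= r]).
Proof.
move=> d1 r0 K0 hg e e0.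
have [c [hc c0]] : exists c, c = 4 * K * r /\ 0 <= c.
  by exists (4 * K * r); split => //; apply: mulr_ge0; [apply: mulr_ge0 =>//|exact: ltW].
have [m hm] : exists m : nat, c ^+ 2 / e + c < m%:R.
  by exists (Num.truncn (c ^+ 2 / e + c)).+1; exact: truncnS_gt.
have ce : 0 <= c ^+ 2 / e by apply: divr_ge0; [exact: sqr_ge0 | exact: ltW].
have mc : c < m%:R by lra.
have mc2 : c ^+ 2 / e < m%:R by lra.
have m0 : 0 < m%:R :> R by lra.
have m0n : (0 < m)%N by move: m0; rewrite ltr0n.
have [h [hh h0]] : exists h, h = 2 * r / m%:R /\ 0 < h.
  by exists (2 * r / m%:R); split => //; rewrite divr_gt0 //; lra.
have [xj hxj] : exists xj : nat -> R, forall j, xj j = - r + j%:R * h.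
  by exists (fun j => - r + j%:R * h).
exists (fun n => \row_i (if (n < m)%N then g (xj n) 0 i - K * h else 0)).
exists (fun n => \row_i (if (n < m)%N then g (xj n) 0 i + K * h else 0)).
have Kh : 0 <= K * h by apply: mulr_ge0 => //; exact: ltW.
split.
- move=> n i; rewrite !mxE; case: ifP => _ //; lra.
- move=> _ [x /andP[x1 x2] <-].
  have [u hu] : exists u, u = (x + r) / h by exists ((x + r) / h).
  have u0 : 0 <= u by rewrite hu divr_ge0 //; [lra | exact: ltW].
  have um : u <= m%:R.
    rewrite hu ler_pdivrMr // hh mulrCA divff ?mulr1; [lra | exact: lt0r_neq0].
  have [j [jm ju1 ju2]] : exists j, [/\ (j < m)%N, j%:R <= u & u <= j%:R + 1].
    case: (ltnP (Num.truncn u) m) => H.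
      exists (Num.truncn u); split => //; first by rewrite truncn_le.
      by rewrite natr1; apply: ltW; exact: truncnS_gt.
    exists m.-1; split; first by rewrite ltn_predL.
      apply: le_trans (_ : (Num.truncn u)%:R <= u); last by rewrite truncn_le.
      by rewrite ler_nat; apply: leq_trans H; exact: leq_pred.
    by rewrite natr1 prednK.
  have xe : x - xj j = (u - j%:R) * h.
    by rewrite hxj hu mulrBl divfK ?lt0r_neq0 //; lra.
  have hx : 0 <= x - xj j <= h.
    rewrite xe; apply/andP; split; first by apply: mulr_ge0; lra.
    rewrite -[X in _ <= X]mul1r; apply: ler_wpM2r; lra.
  have xjr : -r <= xj j <= r.
    apply/andP; split; last by lra.
    rewrite hxj lerDl; apply: mulr_ge0 => //; exact: ltW.
  move/andP: hx => [hx1 hx2].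
  exists j => //= i; rewrite !mxE jm.
  have := hg x (xj j) i (ltac:(by apply/andP)) xjr.
  rewrite [`|x - xj j|]ger0_norm; last by lra.
  move=> hg1; have : K * (x - xj j) <= K * h by apply: ler_wpM2l => //; lra.
  rewrite ler_norml in hg1; move: hg1 => /andP[hh1 hh2] hh3.
  apply/andP; split; lra.
- move=> N.
  have -> : \sum_(n < N) \prod_(i < d)
     ((\row_i (if (n < m)%N then g (xj n) 0 i + K * h else 0)) 0 i -
      (\row_i (if (n < m)%N then g (xj n) 0 i - K * h else 0)) 0 i)
     = \sum_(n < N) (if (n < m)%N then (2 * K * h) ^+ d else 0).
    apply: eq_bigr => n _; case: ifP => nm.
      rewrite (eq_bigr (fun _ => 2 * K * h)); last by move=> i _; rewrite !mxE ?nm /=; lra.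
      by rewrite prodr_const card_ord.
    rewrite (eq_bigr (fun _ => 0)); last by move=> i _; rewrite !mxE ?nm /= subrr.
    by rewrite prodr_const card_ord expr0n; case: d d1.
  apply: le_trans (sum_if_le _ _ _) _.
    by apply: exprn_ge0; apply: mulr_ge0 => //; lra.
  have -> : 2 * K * h = c / m%:R by rewrite hh hc; field; exact: lt0r_neq0.
  case: d d1 => [|[|d']] // _.
  have cm1 : 0 <= c / m%:R <= 1.
    apply/andP; split; first by apply: divr_ge0 => //; exact: ltW.
    by rewrite ler_pdivrMr // mul1r; exact: ltW.
  have hle := exprn_ile1 d' (proj1 (andP cm1)) (proj2 (andP cm1)).
  have ht : (c / m%:R) ^+ d'.+2 = (c / m%:R) ^+ 2 * (c / m%:R) ^+ d'.
    by rewrite -exprD.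
  rewrite ht mulrA; apply: le_trans (_ : m%:R * (c / m%:R) ^+ 2 * 1 <= e).
    apply: ler_wpM2l => //; apply: mulr_ge0; [exact: ler0n | exact: sqr_ge0].
  have -> : m%:R * (c / m%:R) ^+ 2 * 1 = c ^+ 2 / m%:R.
    by field; exact: lt0r_neq0.
  rewrite ler_pdivrMr //; rewrite ltr_pdivrMr // in mc2; lra.
Qed.

End Null.

Section RV.
Variable R : realType.
Variable d : nat.

Lemma null_sub (A B : set 'rV[R]_d) : A `<=` B -> lebesgue_null B -> lebesgue_null A.
Proof.
move=> AB hB e e0; have [a [b [h1 h2 h3]]] := hB e e0.
by exists a, b; split => //; exact: subset_trans AB h2.
Qed.

Lemma null_point (c : 'rV[R]_d) : (0 < d)%N -> lebesgue_null [set c].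
Proof.
move=> d0 e e0; exists (fun=> c), (fun=> c); split.
- by move=> n i.
- by move=> x ->; exists 0%N => // i; rewrite lexx.
- move=> N; rewrite big1 ?ltW // => n _.
  rewrite (eq_bigr (fun _ => 0)); last by move=> i _; rewrite subrr.
  by rewrite prodr_const card_ord expr0n; case: d d0.
Qed.

Lemma dotC (u v : 'rV[R]_d) : dotrv u v = dotrv v u.
Proof. by apply: eq_bigr => i _; rewrite mulrC. Qed.

Lemma dotL (a : R) (x y z : 'rV[R]_d) :
  dotrv (a *: x + y) z = a * dotrv x z + dotrv y z.
Proof.
rewrite /dotrv mulr_sumr -big_split; apply: eq_bigr => i _; by rewrite !mxE mulrDl mulrA.
Qed.

Lemma cvg_sum_ord (T : Type) (F : set_system T) (FF : Filter F) n
  (G : 'I_n -> T -> R) (l : 'I_n -> R) :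
  (forall i, G i @ F --> l i) -> (fun t => \sum_(i < n) G i t) @ F --> \sum_(i < n) l i.
Proof.
elim: n G l => [|n IH] G l hG.
  rewrite big_ord0; under eq_fun do rewrite big_ord0; exact: cvg_cst.
rewrite big_ord_recr /=; under eq_fun do rewrite big_ord_recr /=.
apply: cvgD; last exact: hG.
exact: (IH (fun i => G (widen_ord (leqnSn n) i)) (fun i => l (widen_ord (leqnSn n) i))).
Qed.

Lemma dot_cont : ipcont (@dotrv R d).
Proof.
move=> T F FF a b a0 b0 ha hb; rewrite /dotrv.
apply: cvg_sum_ord => i.
apply: cvgM.
  exact: (@continuous_cvg _ _ _ F FF a (fun M : 'rV[R]_d => M 0 i) a0 (@coord_continuous R 1 d 0 i a0) ha).
exact: (@continuous_cvg _ _ _ F FF b (fun M : 'rV[R]_d => M 0 i) b0 (@coord_continuous R 1 d 0 i b0) hb).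
Qed.

Lemma nip_rv (x : 'rV[R]_d) : `|x| ^+ 2 <= dotrv x x.
Proof.
have -> : `|x| = mx_norm x by [].
have s0 : 0 <= dotrv x x by apply: sumr_ge0 => i _; rewrite -expr2 sqr_ge0.
have [->|/mx_norm_neq0 [[i j] ->]] := eqVneq (mx_norm x) 0.
  by rewrite expr0n.
rewrite /= (real_normK (num_real _)) (ord1 i) /dotrv (bigD1 j) //= -expr2 lerDl.
by apply: sumr_ge0 => k _; rewrite -expr2 sqr_ge0.
Qed.

Lemma coord_derive (Phi : R -> 'rV[R]_d) i x : derivable Phi x 1 ->
  is_derive x 1 (fun y => Phi y 0 i) ((derive1 Phi x) 0 i).
Proof.
move=> dP.
have hq : (fun h : R => h^-1 *: ((Phi \o shift x) (h *: 1) - Phi x)) @ dnbhs (0:R) --> 'D_1 Phi x.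
  exact: dP.
have hc := @continuous_cvg _ _ _ _ _ _ (fun M : 'rV[R]_d => M 0 i) _ (@coord_continuous R 1 d 0 i _) hq.
have e : ((fun M : 'rV[R]_d => M 0 i) \o (fun h : R => h^-1 *: ((Phi \o shift x) (h *: 1) - Phi x)))
   = (fun h : R => h^-1 *: (((fun y => Phi y 0 i) \o shift x) (h *: 1) - Phi x 0 i)).
  by apply/funext => h; rewrite /= !mxE.
rewrite e in hc.
have {}hc := hc (dnbhs_filter _).
have dg : derivable (fun y => Phi y 0 i) x 1 by apply/cvg_ex; eexists; exact: hc.
apply: DeriveDef => //.
by rewrite derive1E /derive (cvg_lim _ hc).
Qed.


Lemma coord_lip (Phi : R -> 'rV[R]_d) (k r : R) :
  (forall w, derivable Phi w 1) ->
  (forall x y, ipnorm (@dotrv R d) (derive1 Phi x - derive1 Phi y) <= k * `|x - y|) ->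
  0 <= r ->
  forall x y i, -r <= x <= r -> -r <= y <= r ->
  `|Phi x 0 i - Phi y 0 i| <= (`|k| * r + ipnorm (@dotrv R d) (derive1 Phi 0)) * `|x - y|.
Proof.
move=> dP hk r0.
have cb (v : 'rV[R]_d) j : `|v 0 j| <= ipnorm (@dotrv R d) v.
  rewrite /ipnorm -sqrtr_sqr ler_sqrt; last by apply: sumr_ge0 => l _; rewrite -expr2 sqr_ge0.
  by rewrite /dotrv (bigD1 j) //= expr2 lerDl; apply: sumr_ge0 => l _; rewrite -expr2 sqr_ge0.
have dbound c j : -r <= c <= r ->
    `|(derive1 Phi c) 0 j| <= `|k| * r + ipnorm (@dotrv R d) (derive1 Phi 0).
  move=> /andP[c1 c2].
  have -> : (derive1 Phi c) 0 j = (derive1 Phi c - derive1 Phi 0) 0 j + (derive1 Phi 0) 0 j.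
    by rewrite !mxE subrK.
  apply: le_trans (ler_normD _ _) _; apply: lerD; last exact: cb.
  apply: le_trans (cb _ _) _; apply: le_trans (hk c 0) _; rewrite subr0.
  have hc : `|c| <= r by rewrite ler_norml; apply/andP; split.
  apply: le_trans (_ : `|k| * `|c| <= _).
    by apply: ler_wpM2r => //; exact: ler_norm.
  by apply: ler_wpM2l.
set K := `|k| * r + _.
suff H : forall x y i, -r <= x <= r -> -r <= y <= r -> x <= y ->
    `|Phi x 0 i - Phi y 0 i| <= K * `|x - y|.
  move=> x y i hx hy; case: (leP x y) => xy; first exact: H.
  by rewrite distrC (distrC x); apply: H => //; exact: ltW.
move=> x y i /andP[x1 x2] /andP[y1 y2] xy.
have hd (z : R) : is_derive z 1 (fun t => Phi t 0 i) ((derive1 Phi z) 0 i).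
  exact: coord_derive.
have [c cin hc] := MVT_segment xy (fun z _ => hd z)
  (derivable_within_continuous (fun z _ => @ex_derive _ _ _ _ _ _ _ (hd z))).
rewrite distrC hc normrM (distrC x) (ger0_norm (_ : 0 <= y - x)); last by rewrite subr_ge0.
apply: ler_wpM2r; first by rewrite subr_ge0.
apply: dbound; move: cin; rewrite in_itv /= => /andP[c1 c2].
apply/andP; split; [exact: le_trans c1 | exact: le_trans c2 _].
Qed.

End RV.

Theorem proposition1 (R : realType) :
  (forall (H : completeNormedModType R) (ip : H -> H -> R) (Phi : R -> H) (f : H),
     is_inner_product ip ->
     (forall x : H, `|x| = ipnorm ip x) ->
     C11 ip Phi ->
     GF_learnable ip Phi f ->
     (exists w : R, f = Phi w) \/
     (Phi x @[x --> -oo] --> f) \/ (Phi x @[x --> +oo] --> f))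
  /\
  (forall (d : nat) (Phi : R -> 'rV[R]_d),
     (2 <= d)%N ->
     C11 (@dotrv R d) Phi ->
     lebesgue_null (GF_learnable (@dotrv R d) Phi)).
Proof.
split.
  by move=> H ip Phi f; exact: part1.
move=> d Phi d2 [dP [k hk]].
pose l1 := lim (Phi x @[x --> -oo]).
pose l2 := lim (Phi x @[x --> +oo]).
pose A := fun n : nat => match n with
  | 0%N => [set l1] | 1%N => [set l2]
  | n'.+2 => Phi @` [set x | - (n'.+1)%:R <= x <= (n'.+1)%:R] end.
have d0 : (0 < d)%N by exact: (leq_trans _ d2).
apply: (@null_sub _ _ _ (\bigcup_n A n)).
  move=> f [w [gs hi]].
  have := gf_main (@dotC R d) (@dotL R d) (@dot_cont R d) (@nip_rv R d) dP gs hi.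
  case=> [[y ->]|[h|h]].
  - exists (Num.truncn `|y|).+2 => //=; exists y => //.
    by rewrite -ler_norml; apply: ltW; exact: truncnS_gt.
  - by exists 0%N => //=; rewrite /l1 (cvg_lim _ h).
  - by exists 1%N => //=; rewrite /l2 (cvg_lim _ h).
apply: null_union => -[|[|n']].
- exact: null_point.
- exact: null_point.
- apply: (null_lip (K := `|k| * (n'.+1)%:R + ipnorm (@dotrv R d) (derive1 Phi 0))) => //.
  + by apply: addr_ge0; [apply: mulr_ge0 | exact: sqrtr_ge0].
  + by apply: coord_lip => //; exact: ler0n.
Qed.
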